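(* Let $c>0$, $f_s>0$, let $M,N,K\ge1$ be integers, set $T_{\max}=(N-1)/f_s$, and let $\bm{r}^{\mathrm{mic}}_1,\dots,\bm{r}^{\mathrm{mic}}_M\in\mathbb{R}^3$ with $E_M=\{\bm{r}^{\mathrm{mic}}_m\}$. Let $\kappa:\mathbb{R}\to\mathbb{R}$ be continuous with $\kappa(0)>0$ and $\lim_{|t|\to+\infty}\kappa(t)=0$, and assume $$\forall \tau\in\Big[0,\frac{N-1}{f_s}\Big],\qquad \sum_{n=0}^{N-1}\kappa(n/f_s-\tau)>0.$$ Then $\Gamma^K$ is amplitude lower-bounded, i.e. there is $C>0$ with $\|\Gamma^K(\bm{a},\bm{r})\|_2\ge C\sum_{k=1}^K a_k$ for all $(\bm{a},\bm{r})\in\mathbb{R}_+^K\times\mathscr{C}^K$.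
   Context: $\mathbb{R}_+=[0,+\infty)$, $\|\cdot\|_2$ is the Euclidean norm. For $\bm{r}\in\mathbb{R}^3\setminus E_M$, $\gamma(\bm{r})\in\mathbb{R}^{MN}$ has components $\gamma_{m,n}(\bm{r})=\dfrac{\kappa\big(n/f_s-\|\bm{r}-\bm{r}^{\mathrm{mic}}_m\|_2/c\big)}{4\pi\|\bm{r}-\bm{r}^{\mathrm{mic}}_m\|_2}$, $1\le m\le M$, $0\le n\le N-1$. $\mathscr{C}=\bigcap_{m=1}^M\overline{B(\bm{r}^{\mathrm{mic}}_m,cT_{\max})}\setminus E_M$. $\Gamma^K(\bm{a},\bm{r})=\sum_{k=1}^K a_k\gamma(\bm{r}_k)$ for $\bm{a}\in\mathbb{R}_+^K$, $\bm{r}=(\bm{r}_1,\dots,\bm{r}_K)\in\mathscr{C}^K$. *)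

(* Defs.v *)
From Stdlib Require Import Reals List.
Import ListNotations.
Open Scope R_scope.

Definition R3 : Type := (R * R * R)%type.

Definition dist3 (p q : R3) : R :=
  let '(x1, y1, z1) := p in let '(x2, y2, z2) := q in
  sqrt ((x1 - x2) ^ 2 + (y1 - y2) ^ 2 + (z1 - z2) ^ 2).

Definition fsum (n : nat) (f : nat -> R) : R :=
  fold_right Rplus 0 (map f (seq 0 n)).

(* gamma_{m,n}(r) (m, n are 0-based indices: m < M, n < N) *)
Definition gamma_mn (kappa : R -> R) (c fs : R) (mic : nat -> R3)
  (r : R3) (m n : nat) : R :=
  kappa (INR n / fs - dist3 r (mic m) / c) / (4 * PI * dist3 r (mic m)).

Definition inC (c Tmax : R) (M : nat) (mic : nat -> R3) (r : R3) : Prop :=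
  (forall m, (m < M)%nat -> dist3 r (mic m) <= c * Tmax) /\
  (forall m, (m < M)%nat -> r <> mic m).

Definition GammaK_norm (kappa : R -> R) (c fs : R) (M N K : nat)
  (mic : nat -> R3) (a : nat -> R) (r : nat -> R3) : R :=
  sqrt (fsum M (fun m => fsum N (fun n =>
     (fsum K (fun k => a k * gamma_mn kappa c fs mic (r k) m n)) ^ 2))).

(* Main.v *)
Require Import Defs.
From Stdlib Require Import Reals List Lra Psatz.
Open Scope R_scope.

Definition sumL {A} (l : list A) (f : A -> R) := fold_right Rplus 0 (map f l).

Lemma L_add {A} (l : list A) f g :
  sumL l (fun x => f x + g x) = sumL l f + sumL l g.
Proof. induction l; unfold sumL in *; simpl; [ring| rewrite IHl; ring]. Qed.

Lemma L_scal {A} (l : list A) c f :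
  sumL l (fun x => c * f x) = c * sumL l f.
Proof. induction l; unfold sumL in *; simpl; [ring| rewrite IHl; ring]. Qed.

Lemma L_div {A} (l : list A) c f :
  sumL l (fun x => f x / c) = sumL l f / c.
Proof. induction l; unfold sumL in *; simpl; unfold Rdiv in *; [ring| rewrite IHl; ring]. Qed.

Lemma L_swap {A B} (l1 : list A) (l2 : list B) f :
  sumL l1 (fun i => sumL l2 (fun j => f i j)) = sumL l2 (fun j => sumL l1 (fun i => f i j)).
Proof.
  induction l1; unfold sumL in *; simpl.
  - induction l2; simpl; [ring| rewrite <- IHl2; ring].
  - rewrite IHl1. symmetry. apply (L_add l2 (fun j => f a j) (fun j => sumL l1 (fun i => f i j))).
Qed.

Lemma L_le {A} (l : list A) f g :
  (forall x, In x l -> f x <= g x) -> sumL l f <= sumL l g.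
Proof.
  induction l; unfold sumL in *; simpl; intros H; [lra|].
  apply Rplus_le_compat; auto.
Qed.

Lemma L_sq {A} (l : list A) f t :
  sumL l (fun x => (f x - t)^2) = sumL l (fun x => f x ^2) - 2*t*sumL l f + INR (length l) * t^2.
Proof.
  induction l; unfold sumL in *; cbn [fold_right map length]; [simpl; ring|].
  rewrite IHl, S_INR. ring.
Qed.

Lemma L_nonneg {A} (l : list A) f : (forall x, In x l -> 0 <= f x) -> 0 <= sumL l f.
Proof.
  intros H. replace 0 with (sumL l (fun _ => 0)).
  - apply L_le; auto.
  - induction l; unfold sumL in *; simpl; [ring| rewrite IHl; [ring| intros; apply H; simpl; auto]].
Qed.

Lemma L_cont (kappa : R -> R) fs l : continuity kappa ->
  continuity (fun tau => sumL l (fun n => kappa (INR n / fs - tau))).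
Proof.
  intros Hk. induction l; unfold sumL in *; simpl.
  - apply continuity_const. intros x y; reflexivity.
  - apply continuity_plus; auto.
    apply (continuity_comp (fun tau => INR a / fs - tau) kappa); auto.
    apply continuity_minus. apply continuity_const; intros x y; reflexivity. apply derivable_continuous, derivable_id.
Qed.

Lemma dist3_pos r q : r <> q -> 0 < dist3 r q.
Proof.
  destruct r as [[x1 y1] z1], q as [[x2 y2] z2]; simpl; intros H.
  apply sqrt_lt_R0.
  destruct (Req_dec x1 x2); [destruct (Req_dec y1 y2); [destruct (Req_dec z1 z2)|]|].
  - subst; congruence.
  - assert (z1 - z2 <> 0) by lra. pose proof (Rsqr_pos_lt _ H3). unfold Rsqr in *. pose proof (pow2_ge_0 (x1-x2)); pose proof (pow2_ge_0 (y1-y2)); pose proof (pow2_ge_0 (z1-z2)). simpl in *. lra.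
  - assert (Hy : y1 - y2 <> 0) by lra. pose proof (Rsqr_pos_lt _ Hy). unfold Rsqr in *. pose proof (pow2_ge_0 (x1-x2)); pose proof (pow2_ge_0 (y1-y2)); pose proof (pow2_ge_0 (z1-z2)). simpl in *. lra.
  - assert (Hx : x1 - x2 <> 0) by lra. pose proof (Rsqr_pos_lt _ Hx). unfold Rsqr in *. pose proof (pow2_ge_0 (x1-x2)); pose proof (pow2_ge_0 (y1-y2)); pose proof (pow2_ge_0 (z1-z2)). simpl in *. lra.
Qed.

Lemma dist3_ge0 r q : 0 <= dist3 r q.
Proof. destruct r as [[x1 y1] z1], q as [[x2 y2] z2]; simpl; apply sqrt_pos. Qed.

Theorem proposition2
  (c fs : R) (M N K : nat) (mic : nat -> R3) (kappa : R -> R) :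
  0 < c -> 0 < fs -> (1 <= M)%nat -> (1 <= N)%nat -> (1 <= K)%nat ->
  continuity kappa ->
  0 < kappa 0 ->
  (forall eps, 0 < eps -> exists T, forall t, T < Rabs t -> Rabs (kappa t) < eps) ->
  (forall tau, 0 <= tau <= INR (N - 1) / fs ->
     0 < fsum N (fun n => kappa (INR n / fs - tau))) ->
  exists C, 0 < C /\
    forall (a : nat -> R) (r : nat -> R3),
      (forall k, (k < K)%nat -> 0 <= a k) ->
      (forall k, (k < K)%nat -> inC c (INR (N - 1) / fs) M mic (r k)) ->
      GammaK_norm kappa c fs M N K mic a r >= C * fsum K a.
Proof.
  intros Hc Hfs HM HN HK Hk Hk0 _ Hpos.
  set (Tmax := INR (N - 1) / fs).
  assert (HT : 0 <= Tmax) by (unfold Tmax, Rdiv; apply Rmult_le_pos; [apply pos_INR|left; apply Rinv_0_lt_compat; lra]).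
  set (g := fun tau => fsum N (fun n => kappa (INR n / fs - tau))).
  destruct (continuity_ab_min g 0 Tmax HT) as [Mx [HMx HMxr]].
  { intros; apply (L_cont kappa fs (seq 0 N) Hk). }
  set (delta := g Mx).
  assert (Hd : 0 < delta) by (apply Hpos; exact HMxr).
  pose proof PI_RGT_0 as HPI.
  set (beta := delta / (4 * PI * (c * Tmax + 1))).
  assert (HcT : 0 <= c * Tmax) by (apply Rmult_le_pos; lra).
  assert (Hb : 0 < beta).
  { unfold beta. apply Rdiv_lt_0_compat; [lra|]. nra. }
  assert (HNp : 0 < INR N) by (apply lt_0_INR; lia).
  set (s := sqrt (INR N)).
  assert (Hs : 0 < s) by (apply sqrt_lt_R0; lra).
  assert (Hss : s * s = INR N) by (apply sqrt_sqrt; lra).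
  exists (beta / s). split; [apply Rdiv_lt_0_compat; lra|].
  intros a r Ha Hr.
  assert (C1 : forall k, (k < K)%nat ->
            beta <= fsum N (fun n => gamma_mn kappa c fs mic (r k) 0 n)).
  { intros k Hk'. destruct (Hr k Hk') as [Hr1 Hr2].
    set (d := dist3 (r k) (mic 0%nat)).
    assert (Hdp : 0 < d) by (apply dist3_pos, Hr2; lia).
    assert (Hdle : d <= c * Tmax) by (apply Hr1; lia).
    unfold fsum, gamma_mn. fold d.
    change (beta <= sumL (seq 0 N) (fun n => kappa (INR n / fs - d / c) / (4 * PI * d))).
    rewrite L_div.
    change (beta <= g (d / c) / (4 * PI * d)).
    assert (Hgd : delta <= g (d / c)).
    { apply HMx. split. unfold Rdiv; apply Rmult_le_pos; [lra|left; apply Rinv_0_lt_compat; lra].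
      apply (Rmult_le_reg_l c); [lra|]. field_simplify; lra. }
    apply Rle_trans with (delta / (4 * PI * d)).
    - unfold beta, Rdiv. apply Rmult_le_compat_l; [lra|].
      apply Rinv_le_contravar; nra.
    - unfold Rdiv. apply Rmult_le_compat_r; [|lra].
      apply Rlt_le, Rinv_0_lt_compat; nra. }
  set (A := fsum K a).
  assert (HA : 0 <= A).
  { apply L_nonneg. intros x Hx. apply in_seq in Hx. apply Ha; lia. }
  set (x := fun n => fsum K (fun k => a k * gamma_mn kappa c fs mic (r k) 0 n)).
  set (S := fsum N x).
  assert (HS : beta * A <= S).
  { unfold S, x, fsum.
    change (beta * A <= sumL (seq 0 N) (fun n => sumL (seq 0 K) (fun k => a k * gamma_mn kappa c fs mic (r k) 0 n))).
    rewrite L_swap.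
    unfold A, fsum. change (fold_right Rplus 0 (map a (seq 0 K))) with (sumL (seq 0 K) a).
    rewrite <- (L_scal (seq 0 K) beta a). apply L_le. intros k Hk'. apply in_seq in Hk'.
    rewrite L_scal. rewrite (Rmult_comm beta). apply Rmult_le_compat_l.
    - apply Ha; lia.
    - apply C1; lia. }
  set (Q := fsum N (fun n => x n ^ 2)).
  set (t := beta * A / INR N).
  assert (Ht : INR N * t = beta * A) by (unfold t; field; lra).
  assert (Ht0 : 0 <= t) by (unfold t, Rdiv; apply Rmult_le_pos; [nra|left; apply Rinv_0_lt_compat; lra]).
  assert (HQ : INR N * t ^ 2 <= Q).
  { pose proof (L_sq (seq 0 N) x t) as E. rewrite length_seq in E.
    assert (0 <= sumL (seq 0 N) (fun n => (x n - t) ^ 2)) by (apply L_nonneg; intros; apply pow2_ge_0).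
    change (sumL (seq 0 N) (fun n => x n ^ 2)) with Q in E.
    change (sumL (seq 0 N) x) with S in E. nra. }
  assert (Htot : Q <= fsum M (fun m => fsum N (fun n =>
     (fsum K (fun k => a k * gamma_mn kappa c fs mic (r k) m n)) ^ 2))).
  { destruct M as [|M']; [lia|]. unfold fsum at 1. cbn [seq map fold_right].
    match goal with |- _ <= _ + ?R => assert (0 <= R) end; [|unfold Q, x; lra].
    apply (L_nonneg (seq 1 M')). intros; apply L_nonneg; intros; apply pow2_ge_0. }
  unfold GammaK_norm. apply Rle_ge.
  replace (beta / s * A) with (sqrt (INR N * t ^ 2)).
  - apply sqrt_le_1_alt. lra.
  - rewrite sqrt_mult_alt by lra. rewrite sqrt_pow2 by lra. fold s.
    apply (Rmult_eq_reg_l s); [|lra]. field_simplify; [|lra]. rewrite <- Ht, <- Hss. ring.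
Qed.
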